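(* Let $\mathbb{O}(P)$ be the limit of order ideals associated with an inverse system $\langle\{P_n\},\{p^n_k\}_{k<n}\rangle$ of nonempty finite posets with quotient maps. Then $\mathbb{O}(P)$ is $\sigma$-complete: every countable subset of $\mathbb{O}(P)$ has a supremum and an infimum in $\mathbb{O}(P)$.
   Context: A quotient map between posets is a surjective order-preserving map $\phi:A\to B$ such that for all $a\le b$ in $B$ there are $x\le y$ in $A$ with $\phi(x)=a,\phi(y)=b$. The inverse system: nonempty finite posets $P_n$, quotient maps $p^m_k:P_m\to P_k$ ($k<m$) with $p^k_l\circ p^m_k=p^m_l$. $\mathcal{O}(P_n)$ is the set of down-sets of $P_n$ under inclusion; for a quotient map $p:Q\to R$ of finite posets, $\hat p(\emptyset)=\emptyset$ and $\hat p(A)=\bigcup_i\downarrow p(a_i)$ over the maximal elements $a_i$ of $A$, where $\downarrow x=\{m:m\le x\}$. $\mathbb{O}(P):=\{(A_n)\in\prod_n\mathcal{O}(P_n):\widehat{p^{n+1}_n}(A_{n+1})=A_n\ \forall n\}$, ordered coordinatewise by inclusion. *)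

(* Defs.v *)
From mathcomp Require Import all_boot all_order.
Set Implicit Arguments. Unset Strict Implicit. Unset Printing Implicit Defensive.
Import Order.TTheory.
Local Open Scope order_scope.

Section Posets.
Variables (d : Order.disp_t).

Definition quotient_map (Q R : finPOrderType d) (phi : Q -> R) : Prop :=
  [/\ (forall x y : Q, x <= y -> phi x <= phi y),
      (forall b : R, exists x : Q, phi x = b) &
      (forall a b : R, a <= b -> exists x y : Q, [/\ x <= y, phi x = a & phi y = b])].

Definition downset (Q : finPOrderType d) (A : {set Q}) : Prop :=
  forall x y : Q, y \in A -> x <= y -> x \in A.

Definition downarrow (Q : finPOrderType d) (x : Q) : {set Q} := [set m | m <= x].

Definition maximal_in (Q : finPOrderType d) (A : {set Q}) (a : Q) : bool :=
  (a \in A) && [forall b in A, (a <= b) ==> (b == a)].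

Definition hat (Q R : finPOrderType d) (p : Q -> R) (A : {set Q}) : {set R} :=
  \bigcup_(a in [set a | maximal_in A a]) downarrow (p a).
End Posets.

Definition inverse_system d (P : nat -> finPOrderType d)
  (p : forall m k : nat, P m -> P k) : Prop :=
  [/\ (forall n, exists x : P n, True),
      (forall m k, (k < m)%N -> quotient_map (p m k)) &
      (forall m k l, (l < k)%N -> (k < m)%N -> forall x, p k l (p m k x) = p m l x)].

Definition inOP d (P : nat -> finPOrderType d) (p : forall m k : nat, P m -> P k)
  (A : forall n, {set P n}) : Prop :=
  (forall n, downset (A n)) /\ (forall n, hat (p n.+1 n) (A n.+1) = A n).

Definition leOP d (P : nat -> finPOrderType d) (A B : forall n, {set P n}) : Prop :=
  forall n, A n \subset B n.

Definition countable_family d (P : nat -> finPOrderType d)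
  (S : (forall n, {set P n}) -> Prop) : Prop :=
  exists f : nat -> (forall n, {set P n}), forall A, S A -> exists i, f i = A.

Definition is_sup_OP d (P : nat -> finPOrderType d) (p : forall m k : nat, P m -> P k)
  (S : (forall n, {set P n}) -> Prop) (U : forall n, {set P n}) : Prop :=
  [/\ inOP p U, (forall A, S A -> leOP A U) &
      (forall V, inOP p V -> (forall A, S A -> leOP A V) -> leOP U V)].

Definition is_inf_OP d (P : nat -> finPOrderType d) (p : forall m k : nat, P m -> P k)
  (S : (forall n, {set P n}) -> Prop) (L : forall n, {set P n}) : Prop :=
  [/\ inOP p L, (forall A, S A -> leOP L A) &
      (forall V, inOP p V -> (forall A, S A -> leOP V A) -> leOP V L)].

(* Main.v *)
Require Import Defs.
From mathcomp Require Import all_boot all_order.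
From Stdlib Require Import ClassicalEpsilon Classical.
From mathcomp Require Import zify.
Set Implicit Arguments. Unset Strict Implicit. Unset Printing Implicit Defensive.
Import Order.TTheory.
Local Open Scope order_scope.

Definition cb (P : Prop) : bool := if excluded_middle_informative P then true else false.
Lemma cbP (P : Prop) : reflect P (cb P).
Proof. rewrite /cb; case: excluded_middle_informative => h; by constructor. Qed.

Section Aux.
Variable d : Order.disp_t.

Lemma exists_max (Q : finPOrderType d) (A : {set Q}) (a : Q) :
  a \in A -> exists b, maximal_in A b /\ a <= b.
Proof.
move=> aA.
suff H : forall k (b : Q), leq #|[set c in A | b < c]| k -> b \in A -> a <= b ->
   exists b0, maximal_in A b0 /\ a <= b0.
  by apply: (H _ a (leqnn _)) => //.
elim=> [|k IH] b.
- rewrite leqn0 cards_eq0 => /eqP H0 bA ab; exists b; split => //.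
  rewrite /maximal_in bA /=; apply/forall_inP => c cA; apply/implyP => bc.
  case: (eqVneq c b) => // ncb.
  have : c \in [set c in A | b < c] by rewrite inE cA lt_neqAle eq_sym ncb bc.
  by rewrite H0 inE.
- move=> Hk bA ab.
  case: (boolP [exists c in A, b < c]).
  + move=> /exists_inP [c cA bc]; apply: (IH c) => //; last exact: le_trans ab (ltW bc).
    rewrite -ltnS; apply: leq_trans Hk; apply: proper_card.
    apply/properP; split.
    * apply/subsetP => x; rewrite !inE => /andP [-> cx] /=; exact: lt_trans bc cx.
    * exists c; first by rewrite inE cA bc.
      by rewrite inE ltxx andbF.
  + move=> /exists_inPn H; exists b; split => //.
    rewrite /maximal_in bA /=; apply/forall_inP => c cA; apply/implyP => bc.
    case: (eqVneq c b) => // ncb.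
    by have := H c cA; rewrite lt_neqAle eq_sym ncb bc.
Qed.

Lemma hatE (Q R : finPOrderType d) (f : Q -> R)
  (mono : forall x y : Q, x <= y -> f x <= f y) (X : {set Q}) :
  hat f X = [set y | cb (exists a, a \in X /\ y <= f a)].
Proof.
apply/setP => y; rewrite inE /hat.
apply/bigcupP/cbP.
- move=> [a]; rewrite inE => /andP [aX _]; rewrite inE => ya.
  by exists a.
- move=> [a [aX ya]]; have [b [mb ab]] := exists_max aX.
  exists b; first by rewrite inE.
  rewrite inE; exact: le_trans ya (mono _ _ ab).
Qed.

Lemma stab (T : finType) (F : nat -> {set T}) :
  (forall j, F j.+1 \subset F j) -> exists J, forall j, F J \subset F j.
Proof.
move=> dec.
have decg : forall j j', (j <= j')%N -> F j' \subset F j.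
  move=> j j' /subnKC <-; elim: (j' - j) => [|k IH]; first by rewrite addn0.
  by rewrite addnS; apply: subset_trans (dec _) IH.
suff H : forall k J, (#|F J| <= k)%N -> exists J, forall j, F J \subset F j.
  exact: (H _ 0 (leqnn _)).
elim=> [|k IH] J.
- rewrite leqn0 cards_eq0 => /eqP H0; exists J => j; by rewrite H0 sub0set.
- move=> HJ.
  case: (classic (forall j, F J \subset F j)) => [h|]; first by exists J.
  move=> /not_all_ex_not [j hj].
  have jJ : (J < j)%N.
    rewrite ltnNge; apply/negP => jJ; apply: hj; exact: decg.
  apply: (IH j).
  have : (#|F j| < #|F J|)%N.
    apply: proper_card.
    rewrite properEneq (decg J j (ltnW jJ)) andbT.
    apply/negP => /eqP e; apply: hj; rewrite -e; exact: subxx.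
  move=> h; rewrite -ltnS; exact: leq_trans h HJ.
Qed.

End Aux.

Theorem mainTheorem16 (d : Order.disp_t) (P : nat -> finPOrderType d)
  (p : forall m k : nat, P m -> P k) :
  inverse_system p ->
  forall S : (forall n, {set P n}) -> Prop,
    countable_family S ->
    (forall A, S A -> inOP p A) ->
    (exists U, is_sup_OP p S U) /\ (exists L, is_inf_OP p S L).
Proof.
move=> [_ qm comp] S _ SO.
have mono : forall m k, (k < m)%N -> forall x y, x <= y -> p m k x <= p m k y.
  by move=> m k km; case: (qm m k km).
have hE : forall n X, hat (p n.+1 n) X = [set y | cb (exists a, a \in X /\ y <= p n.+1 n a)].
  move=> n X; apply: hatE; exact: mono.
have Aimg : forall A n y, S A -> (y \in A n <-> exists a, a \in A n.+1 /\ y <= p n.+1 n a).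
  move=> A n y SA; have [_ h] := SO A SA; rewrite -(h n) hE inE.
  by split => /cbP.
split.
- exists (fun n => [set x | cb (exists A, S A /\ x \in A n)]); split.
  + split.
    * move=> n x y; rewrite !inE => /cbP [A [SA yA]] xy; apply/cbP; exists A; split => //.
      have [hd _] := SO A SA; exact: hd yA xy.
    * move=> n; apply/setP => y; rewrite hE !inE; apply/cbP/cbP.
      -- move=> [a []]; rewrite inE => /cbP [A [SA aA]] ya; exists A; split => //.
         by apply/(Aimg A n y SA); exists a.
      -- move=> [A [SA yA]]; have [a [aA ya]] := (Aimg A n y SA).1 yA.
         exists a; split => //; rewrite inE; apply/cbP; by exists A.
  + move=> A SA n; apply/subsetP => x xA; rewrite inE; apply/cbP; by exists A.
  + move=> V _ HV n; apply/subsetP => x; rewrite inE => /cbP [A [SA xA]].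
    by move/subsetP: (HV A SA n); apply.
- pose I m := [set x : P m | cb (forall A, S A -> x \in A m)].
  have IS : forall m x A, x \in I m -> S A -> x \in A m.
    by move=> m x A; rewrite inE => /cbP; apply.
  have Ip : forall m x, x \in I m.+1 -> p m.+1 m x \in I m.
    move=> m x xI; rewrite inE; apply/cbP => A SA; apply/(Aimg A m _ SA).
    by exists x; split; [exact: IS xI SA|].
  have Ip' : forall m m' x, m' = m.+1 -> x \in I m' -> p m' m x \in I m.
    by move=> m m' x e; subst m'; apply: Ip.
  pose D n j := [set x : P n | cb (exists M (z : P M), [/\ M = n + j.+1, z \in I M & x <= p M n z])].
  have Ddec : forall n j, D n j.+1 \subset D n j.
    move=> n j; apply/subsetP => x; rewrite !inE => /cbP [M [z [eM zI xz]]]; apply/cbP.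
    exists (n + j.+1), (p M (n + j.+1) z); split => //.
      by apply: Ip'; rewrite // eM addnS.
    have h1 : (n < n + j.+1)%N by rewrite addnS ltnS leq_addr.
    have h2 : (n + j.+1 < M)%N by rewrite eM [n + j.+2]addnS.
    by rewrite comp.
  pose L n := [set x : P n | cb (forall j, x \in D n j)].
  exists L; split.
  + split.
    * move=> n x y; rewrite !inE => /cbP H xy; apply/cbP => j.
      move: (H j); rewrite !inE => /cbP [M [z [eM zI yz]]]; apply/cbP; exists M, z; split => //.
      exact: le_trans xy yz.
    * move=> n; apply/setP => y; rewrite hE !inE; apply/cbP/cbP.
      -- move=> [a []]; rewrite inE => /cbP aL ya j.
         apply: (subsetP (Ddec n j)).
         move: (aL j); rewrite !inE => /cbP [M [z [eM zI az]]]; apply/cbP.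
         have e : M = n + j.+2 by rewrite eM; lia.
         exists M, z; split => //.
         apply: le_trans ya _.
         rewrite -(comp M n.+1 n) //; last by rewrite eM; lia.
         exact: mono.
      -- move=> yL.
         pose G j := [set a in D n.+1 j | y <= p n.+1 n a].
         have [J HJ] : exists J, forall j, G J \subset G j.
           apply: stab => j; apply/subsetP => a; rewrite [a \in G j.+1]inE => /andP [aD ya]; rewrite inE ya andbT.
           by rewrite (subsetP (Ddec _ _) _ aD).
         move: (yL J.+1); rewrite inE => /cbP [M [z [eM zI yz]]].
         have lt1 : (n.+1 < M)%N by rewrite eM; lia.
         have aG : p M n.+1 z \in G J.
           rewrite inE; apply/andP; split.
           ++ rewrite inE; apply/cbP; exists M, z; split => //.
              by rewrite eM; lia.
           ++ rewrite (comp M n.+1 n) // ltnSn.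
         exists (p M n.+1 z); split; last by rewrite (comp M n.+1 n) // ltnSn.
         rewrite inE; apply/cbP => j.
         by move: (subsetP (HJ j) _ aG); rewrite inE => /andP [].
  + move=> A SA n; apply/subsetP => x; rewrite inE => /cbP /(_ 0).
    rewrite inE => /cbP [M [z [eM zI xz]]]; apply/(Aimg A n x SA).
    move: z zI xz; rewrite eM addn1 => z zI xz.
    by exists z; split => //; apply: IS zI SA.
  + move=> V [Vd Vh] HV n.
    have VI : forall m x, x \in V m -> x \in I m.
      move=> m x xV; rewrite inE; apply/cbP => A SA.
      by move/subsetP: (HV A SA m); apply.
    have Vimg : forall m y, y \in V m -> exists a, a \in V m.+1 /\ y <= p m.+1 m a.
      by move=> m y; rewrite -(Vh m) hE inE => /cbP.
    have Vdesc : forall k x, x \in V n -> exists M (z : P M), [/\ M = n + k.+1, z \in V M & x <= p M n z].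
      elim=> [|k IH] x xV.
        have [a [aV xa]] := Vimg _ _ xV; exists n.+1, a; split => //; by rewrite addn1.
      have [M [z [eM zV xz]]] := IH x xV.
      have [w [wV zw]] := Vimg _ _ zV.
      exists M.+1, w; split => //; first by rewrite eM; lia.
      apply: le_trans xz _.
      rewrite -(comp M.+1 M n) //; last by rewrite eM; lia.
      apply: mono => //.
      by rewrite eM; lia.
    apply/subsetP => x xV; rewrite inE; apply/cbP => j; rewrite inE; apply/cbP.
    have [M [z [eM zV xz]]] := Vdesc j x xV; exists M, z; split => //; exact: VI.
Qed.
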